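(* For integers $\ell,k$ with $1\le\ell\le 3$ and $k\ge\ell$, $\overline{\alpha}(\{1,2k,2k+2\ell\})=\frac{2k}{4k+2\ell}$.
   Context: For a finite set $S$ of positive integers, the distance graph $G(S)$ has vertex set $\mathbb{Z}$, with $i,j$ adjacent iff $|i-j|\in S$. The density of $A\subseteq\mathbb{Z}$ is $\delta(A)=\limsup_{N\to\infty}\frac{|A\cap[-N,N]|}{2N+1}$, and the independence ratio $\overline{\alpha}(S)$ is the supremum of $\delta(A)$ over independent sets $A$ of $G(S)$. *)

(* Defs.v *)
From Stdlib Require Import Reals ZArith List.
From Coquelicot Require Import Coquelicot.
Open Scope R_scope.

Definition pos_set (S : list Z) : Prop := forall s, In s S -> (0 < s)%Z.

(* Subsets of Z are represented by boolean predicates (every subset has one,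
   classically). A is independent in the distance graph G(S) iff no two of its
   elements are at a distance lying in S. *)
Definition independent (S : list Z) (A : Z -> bool) : Prop :=
  forall i j : Z, A i = true -> A j = true -> ~ In (Z.abs (i - j)) S.

Definition window (N : nat) : list Z :=
  map (fun i => (Z.of_nat i - Z.of_nat N)%Z) (seq 0 (2 * N + 1)).

Definition dens_ratio (A : Z -> bool) (N : nat) : R :=
  INR (length (filter A (window N))) / INR (2 * N + 1).

Definition density (A : Z -> bool) : Rbar := LimSup_seq (dens_ratio A).

Definition indep_ratio (S : list Z) : Rbar :=
  Rbar_lub (fun x => exists A, independent S A /\ density A = x).

(* Main.v *)
Require Import Defs.
From Stdlib Require Import Reals ZArith List.
From Coquelicot Require Import Coquelicot.
From Stdlib Require Import Lia Lra Bool Classical.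

Open Scope Z_scope.

Definition rng (a n : Z) : list Z := map (fun i => a + Z.of_nat i) (seq 0 (Z.to_nat n)).
Definition cnt (p : Z -> bool) (a n : Z) : Z := Z.of_nat (length (filter p (rng a n))).

Lemma rng_succ a n : 0 <= n -> rng a (n+1) = rng a n ++ (a + n) :: nil.
Proof.
  intro H. unfold rng. rewrite Z2Nat.inj_add by lia.
  rewrite seq_app, map_app. simpl. f_equal. f_equal. rewrite Z2Nat.id; lia.
Qed.

Lemma cnt_0 p a : cnt p a 0 = 0.
Proof. reflexivity. Qed.

Lemma cnt_succ p a n : 0 <= n -> cnt p a (n+1) = cnt p a n + (if p (a+n) then 1 else 0).
Proof.
  intro H. unfold cnt. rewrite rng_succ by lia. rewrite filter_app, length_app.
  simpl. destruct (p (a+n)); simpl; lia.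
Qed.

Lemma In_rng x a n : In x (rng a n) <-> a <= x < a + n.
Proof.
  unfold rng. rewrite in_map_iff. split.
  - intros [i [<- Hi]]. apply in_seq in Hi. lia.
  - intro H. exists (Z.to_nat (x - a)). split. lia. apply in_seq. lia.
Qed.

Lemma cnt_nonneg p a n : 0 <= cnt p a n.
Proof. unfold cnt; lia. Qed.

Lemma cnt_add p a n m : 0 <= n -> 0 <= m -> cnt p a (n+m) = cnt p a n + cnt p (a+n) m.
Proof.
  intros Hn Hm. pattern m. apply natlike_ind; [ | | exact Hm].
  - rewrite Z.add_0_r, cnt_0. lia.
  - intros x Hx IH. replace (n + Z.succ x) with ((n+x)+1) by lia.
    rewrite cnt_succ by lia. unfold Z.succ. rewrite cnt_succ by lia. rewrite IH.
    replace (a + (n+x)) with (a+n+x) by lia. lia.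
Qed.

Lemma cnt_ext p q a n : (forall x, a <= x < a + n -> p x = q x) -> cnt p a n = cnt q a n.
Proof.
  intro H. unfold cnt. f_equal. f_equal. apply filter_ext_in. intros x Hx.
  apply H. apply In_rng. exact Hx.
Qed.

Lemma cnt_neg p a n : n <= 0 -> cnt p a n = 0.
Proof. intro H. unfold cnt, rng. replace (Z.to_nat n) with 0%nat by lia. reflexivity. Qed.

Lemma cnt_le p q a n : (forall x, a <= x < a + n -> p x = true -> q x = true) -> cnt p a n <= cnt q a n.
Proof.
  intro H. destruct (Z_lt_le_dec n 0) as [Hn|Hn].
  { rewrite !cnt_neg by lia. lia. }
  assert (G: forall m, 0 <= m -> m <= n -> cnt p a m <= cnt q a m).
  { intros m Hm. pattern m. apply natlike_ind; [ | | exact Hm].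
    - intros. rewrite !cnt_0; lia.
    - intros x Hx IH Hxn. unfold Z.succ. rewrite !cnt_succ by lia.
      specialize (IH ltac:(lia)). specialize (H (a+x) ltac:(lia)).
      destruct (p (a+x)), (q (a+x)); try lia; specialize (H eq_refl); discriminate. }
  apply G; lia.
Qed.

Lemma cnt_le_len p a n : 0 <= n -> cnt p a n <= n.
Proof.
  intro Hn. pattern n. apply natlike_ind; [ | | exact Hn].
  - rewrite cnt_0; lia.
  - intros x Hx IH. unfold Z.succ. rewrite cnt_succ by lia. destruct (p (a+x)); lia.
Qed.

Lemma cnt_shift p a c n : cnt p (a + c) n = cnt (fun x => p (x + c)) a n.
Proof.
  destruct (Z_lt_le_dec n 0) as [Hn|Hn]. { rewrite !cnt_neg by lia; lia. }
  pattern n. apply natlike_ind; [ | | exact Hn].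
  - rewrite !cnt_0; lia.
  - intros x Hx IH. unfold Z.succ. rewrite !cnt_succ by lia. rewrite IH.
    replace (a + c + x) with (a + x + c) by lia. reflexivity.
Qed.

Lemma cnt_sum2 (p q : Z -> bool) a n : 0 <= n -> (forall x, a <= x < a+n -> (if p x then 1 else 0) + (if q x then 1 else 0) = 1) ->
  cnt p a n + cnt q a n = n.
Proof.
  intros Hn H. assert (G: forall m, 0 <= m -> m <= n -> cnt p a m + cnt q a m = m).
  { intros m Hm. pattern m. apply natlike_ind; [ | | exact Hm].
    - intros. rewrite !cnt_0; lia.
    - intros x Hx IH Hxn. unfold Z.succ. rewrite !cnt_succ by lia.
      specialize (IH ltac:(lia)). specialize (H (a+x) ltac:(lia)). lia. }
  apply G; lia.
Qed.

Lemma cnt_sum3 (p q r : Z -> bool) a n : 0 <= n -> (forall x, a <= x < a+n ->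
   (if p x then 1 else 0) + (if q x then 1 else 0) + (if r x then 1 else 0) = 1) ->
  cnt p a n + cnt q a n + cnt r a n = n.
Proof.
  intros Hn H. assert (G: forall m, 0 <= m -> m <= n -> cnt p a m + cnt q a m + cnt r a m = m).
  { intros m Hm. pattern m. apply natlike_ind; [ | | exact Hm].
    - intros. rewrite !cnt_0; lia.
    - intros x Hx IH Hxn. unfold Z.succ. rewrite !cnt_succ by lia.
      specialize (IH ltac:(lia)). specialize (H (a+x) ltac:(lia)). lia. }
  apply G; lia.
Qed.

Lemma cnt_ge_list p a n (L : list Z) : NoDup L -> (forall x, In x L -> a <= x < a + n /\ p x = true) ->
  Z.of_nat (length L) <= cnt p a n.
Proof.
  intros HN H. unfold cnt. apply Nat2Z.inj_le. apply NoDup_incl_length; auto.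
  intros x Hx. apply filter_In. destruct (H x Hx). split; auto. apply In_rng; auto.
Qed.

Lemma NoDup_map_in {A B} (f : A -> B) (l : list A) :
  (forall x y, In x l -> In y l -> f x = f y -> x = y) -> NoDup l -> NoDup (map f l).
Proof. intros H HN. apply NoDup_map_NoDup_ForallPairs; [intros x y Hx Hy; apply H; auto | exact HN]. Qed.

Lemma NoDup_rng a n : NoDup (rng a n).
Proof.
  unfold rng. apply NoDup_map_in. intros x y _ _ H. lia. apply seq_NoDup.
Qed.

Lemma cnt_list p a n : exists L, NoDup L /\ Z.of_nat (length L) = cnt p a n /\
  (forall x, In x L -> a <= x < a + n /\ p x = true).
Proof.
  exists (filter p (rng a n)). split; [|split].
  - apply NoDup_filter. apply NoDup_rng.
  - reflexivity.
  - intros x Hx. apply filter_In in Hx. destruct Hx. split; auto. apply In_rng; auto.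
Qed.

Open Scope Z_scope.

Section Orbit.
Variable beta : Z -> bool.
Variables k P : Z.
Hypothesis HP : 0 < P.
Hypothesis Hper : forall y, beta (y + P) = beta y.

Lemma per_mul : forall q y, beta (y + P * q) = beta y.
Proof.
  assert (G: forall q, 0 <= q -> forall y, beta (y + P*q) = beta y).
  { intros q Hq. pattern q. apply natlike_ind; [ | | exact Hq].
    - intro y. rewrite Z.mul_0_r, Z.add_0_r. reflexivity.
    - intros x Hx IH y. replace (y + P * Z.succ x) with ((y + P*x) + P) by lia.
      rewrite Hper. apply IH. }
  intros q y. destruct (Z_le_gt_dec 0 q). apply G; auto.
  rewrite <- (G (-q) ltac:(lia) (y + P*q)). f_equal. lia.
Qed.

Lemma per_mod : forall y, beta (y mod P) = beta y.
Proof.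
  intro y. rewrite (Z_div_mod_eq_full y P) at 2.
  rewrite Z.add_comm. symmetry. apply per_mul.
Qed.

Definition agreeb (y : Z) : bool := Bool.eqb (beta y) (beta (y + 2*k)).
Definition flipb (y : Z) : bool := negb (Bool.eqb (beta y) (beta (y + 1))).

Lemma agreeb_mod y : agreeb (y mod P) = agreeb y.
Proof.
  unfold agreeb. rewrite per_mod. f_equal.
  rewrite (Z_div_mod_eq_full y P) at 2.
  replace (P * (y / P) + y mod P + 2 * k) with ((y mod P + 2*k) + P * (y/P)) by lia.
  rewrite per_mul. reflexivity.
Qed.

Lemma flipb_mod y : flipb (y mod P) = flipb y.
Proof.
  unfold flipb. rewrite per_mod. f_equal. f_equal.
  rewrite (Z_div_mod_eq_full y P) at 2.
  replace (P * (y / P) + y mod P + 1) with ((y mod P + 1) + P * (y/P)) by lia.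
  rewrite per_mul. reflexivity.
Qed.

Variable r : Z.
Definition yj (j : Z) : Z := r + 2*k*j.
Definition agr (j : Z) : bool := agreeb (yj j).

Lemma alt_all j0 m : 0 <= m -> (forall i, 0 <= i < m -> agr (j0 + i) = false) ->
  beta (yj (j0 + m)) = xorb (beta (yj j0)) (Z.odd m).
Proof.
  intros Hm. pattern m. apply natlike_ind; [ | | exact Hm].
  - intros _. rewrite Z.add_0_r. simpl. rewrite xorb_false_r. reflexivity.
  - intros x Hx IH H. rewrite Z.odd_succ. rewrite <- Z.negb_odd.
    specialize (IH (fun i Hi => H i ltac:(lia))).
    specialize (H x ltac:(lia)). unfold agr, agreeb in H.
    replace (yj (j0 + Z.succ x)) with (yj (j0 + x) + 2*k) by (unfold yj; lia).
    rewrite IH in H. destruct (beta (yj (j0 + x) + 2 * k)), (beta (yj j0)), (Z.odd x); simpl in *;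
    try reflexivity; discriminate.
Qed.

Lemma alt_cnt m : 0 <= m ->
  beta (yj m) = xorb (beta (yj 0)) (Z.odd (cnt (fun j => negb (agr j)) 0 m)).
Proof.
  intros Hm. pattern m. apply natlike_ind; [ | | exact Hm].
  - rewrite cnt_0. simpl. rewrite xorb_false_r. reflexivity.
  - intros x Hx IH. unfold Z.succ. rewrite cnt_succ by lia. simpl.
    replace (yj (x+1)) with (yj x + 2*k) by (unfold yj; lia).
    unfold agr at 2, agreeb. rewrite Z.odd_add. rewrite IH.
    destruct (beta (yj x + 2 * k)), (beta (yj 0)), (Z.odd (cnt (fun j : Z => negb (agr j)) 0 x)); simpl;
    reflexivity.
Qed.

Lemma parity_orbit M t : 0 <= M -> 2*k*M = t*P ->
  Z.odd (cnt agr 0 M) = Z.odd M.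
Proof.
  intros HM Ht.
  assert (E : beta (yj M) = beta (yj 0)).
  { unfold yj. replace (r + 2*k*M) with (r + 2*k*0 + P * t) by lia. apply per_mul. }
  rewrite alt_cnt in E by lia.
  assert (Hodd : Z.odd (cnt (fun j => negb (agr j)) 0 M) = false).
  { destruct (Z.odd (cnt (fun j : Z => negb (agr j)) 0 M)); auto.
    destruct (beta (yj 0)); simpl in E; discriminate. }
  assert (S : cnt agr 0 M + cnt (fun j => negb (agr j)) 0 M = M).
  { apply cnt_sum2; auto. intros x _. destruct (agr x); reflexivity. }
  assert (O : Z.odd M = Z.odd (cnt agr 0 M + cnt (fun j => negb (agr j)) 0 M)) by (rewrite S; reflexivity).
  rewrite O, Z.odd_add, Hodd. destruct (Z.odd (cnt agr 0 M)); reflexivity.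
Qed.

End Orbit.

Open Scope Z_scope.

Lemma inj_mod (g k k' M P u v x x' d e : Z) :
  0 < g -> 0 < M -> P = 2*g*M -> k = g*k' -> u*M + v*k' = 1 ->
  x mod P = x' mod P -> x - x' = 2*k*d + e -> -M < d < M -> -1 <= e <= 1 -> d = 0 /\ e = 0.
Proof.
  intros Hg HM HP Hk Hb Hm Hx Hd He.
  assert (HP0 : 0 < P) by nia.
  pose proof (Z_div_mod_eq_full x P) as E1. pose proof (Z_div_mod_eq_full x' P) as E2.
  set (q := x/P - x'/P).
  assert (Hq : 2*k*d + e = P*q) by (unfold q; nia).
  rewrite HP, Hk in Hq.
  assert (He0 : e = 0).
  { assert (Z.even (2*g*k'*d + e) = Z.even (2*g*M*q)) by (f_equal; lia).
    rewrite Z.even_add in H.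
    replace (2*g*k'*d) with (2*(g*k'*d)) in H by ring.
    replace (2*g*M*q) with (2*(g*M*q)) in H by ring.
    rewrite !Z.even_mul in H. simpl in H.
    destruct (Z.eq_dec e 0); auto. assert (e = 1 \/ e = -1) as [-> | ->] by lia; simpl in H; discriminate. }
  subst e. split; auto.
  assert (H1 : k'*d = M*q).
  { apply Z.mul_reg_l with (p := 2*g). lia.
    replace (2*g*(k'*d)) with (2*(g*k')*d + 0) by ring. rewrite Hq. ring. }
  assert (H2 : d = M * (u*d + v*q)).
  { transitivity (d * (u*M + v*k')). rewrite Hb; ring.
    replace (d*(u*M+v*k')) with (u*M*d + v*(k'*d)) by ring. rewrite H1; ring. }
  destruct (Z_lt_le_dec (u*d+v*q) 0); [|destruct (Z.eq_dec (u*d+v*q) 0)]; nia.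
Qed.

Lemma residue (g k k' M P r j : Z) : 0 < P -> P = 2*g*M -> k = g*k' ->
  exists w, (r + 2*k*j) mod P = r + 2*g*w.
Proof.
  intros HP0 HP Hk. exists (k'*j - M * ((r + 2*k*j)/P)).
  pose proof (Z_div_mod_eq_full (r + 2*k*j) P). subst. nia.
Qed.

Lemma NoDup_flat_map {A B} (f : A -> list B) (R : list A) :
  NoDup R -> (forall a, In a R -> NoDup (f a)) ->
  (forall a a' x, In a R -> In a' R -> In x (f a) -> In x (f a') -> a = a') ->
  NoDup (flat_map f R).
Proof.
  induction R as [|a R IH]; intros HN Hf Hd; simpl. constructor.
  inversion HN; subst. apply NoDup_app.
  - apply Hf; simpl; auto.
  - apply IH; auto. intros; apply Hf; simpl; auto. intros b b' x Hb Hb' Hx Hx'. eapply Hd; simpl; eauto.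
  - intros x Hx Hx'. apply in_flat_map in Hx'. destruct Hx' as [b [Hb Hxb]].
    assert (a = b) by (eapply Hd; simpl; eauto). subst. contradiction.
Qed.

Lemma length_flat_map_ge {A B} (f : A -> list B) (R : list A) n :
  (forall a, In a R -> (n <= length (f a))%nat) -> (length R * n <= length (flat_map f R))%nat.
Proof.
  induction R as [|a R IH]; intros H; simpl. lia.
  rewrite length_app.
  assert (length R * n <= length (flat_map f R))%nat by (apply IH; intros; apply H; simpl; auto).
  specialize (H a (or_introl eq_refl)). lia.
Qed.

Section Total.
Variable beta : Z -> bool.
Variables g k k' M P u v : Z.
Hypothesis Hg : 0 < g.
Hypothesis HM : 0 < M.
Hypothesis HPd : P = 2*g*M.
Hypothesis Hk : k = g*k'.
Hypothesis Hb : u*M + v*k' = 1.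
Hypothesis Hper : forall y, beta (y + P) = beta y.

Lemma HP0 : 0 < P. Proof. nia. Qed.

Definition posL (r : Z) : list Z :=
  map (fun j => (r + 2*k*j) mod P) (filter (agr beta k r) (rng 0 M)).

Lemma posL_nodup r : NoDup (posL r).
Proof.
  unfold posL. apply NoDup_map_in.
  - intros j j' Hj Hj' E. apply filter_In in Hj, Hj'. destruct Hj as [Hj _], Hj' as [Hj' _].
    apply In_rng in Hj, Hj'.
    destruct (inj_mod g k k' M P u v (r + 2*k*j) (r + 2*k*j') (j - j') 0) as [H1 _]; auto; try lia.
  - apply NoDup_filter, NoDup_rng.
Qed.

Lemma posL_len r : Z.of_nat (length (posL r)) = cnt (agr beta k r) 0 M.
Proof. unfold posL, cnt. rewrite length_map. reflexivity. Qed.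

Lemma posL_prop r x : In x (posL r) -> (0 <= x < P /\ agreeb beta k x = true) /\ exists w, x = r + 2*g*w.
Proof.
  pose proof HP0.
  unfold posL. intro H0. apply in_map_iff in H0. destruct H0 as [j [<- Hj]].
  apply filter_In in Hj. destruct Hj as [_ Hj]. split; [split|].
  - apply Z.mod_pos_bound; auto.
  - rewrite agreeb_mod; auto.
  - apply residue with (k' := k') (M := M); auto.
Qed.

Lemma total_count need : 0 <= need ->
  (forall r, 0 <= r < 2*g -> need <= cnt (agr beta k r) 0 M) ->
  2*g*need <= cnt (agreeb beta k) 0 P.
Proof.
  intros Hn H.
  set (L := flat_map posL (rng 0 (2*g))).
  assert (HL : Z.of_nat (length L) <= cnt (agreeb beta k) 0 P).
  { apply cnt_ge_list.
    - apply NoDup_flat_map. apply NoDup_rng. intros; apply posL_nodup.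
      intros a a' x Ha Ha' Hx Hx'. apply In_rng in Ha, Ha'.
      destruct (posL_prop a x Hx) as [_ [w Hw]]. destruct (posL_prop a' x Hx') as [_ [w' Hw']].
      assert (E : a - a' = 2*g*(w'-w)) by lia.
      destruct (Z_lt_le_dec (w'-w) 0); [|destruct (Z.eq_dec (w'-w) 0)].
      + assert (2*g*(w'-w) <= -(2*g)) by nia. lia.
      + rewrite e, Z.mul_0_r in E. lia.
      + assert (2*g*(w'-w) >= 2*g) by nia. lia.
    - intros x Hx. apply in_flat_map in Hx. destruct Hx as [a [_ Hx]].
      destruct (posL_prop a x Hx) as [[H1 H2] _]. split; [lia | auto]. }
  assert (HL2 : (length (rng 0 (2*g)) * Z.to_nat need <= length L)%nat).
  { apply length_flat_map_ge. intros a Ha. apply In_rng in Ha.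
    specialize (H a ltac:(lia)). rewrite <- posL_len in H. lia. }
  unfold rng in HL2. rewrite length_map, length_seq in HL2. nia.
Qed.

End Total.

Open Scope Z_scope.

Section Hard.
Variable beta : Z -> bool.
Variables k M P u v tau sigma q F : Z.
Hypothesis HM : 0 < M.
Hypothesis HPd : P = 2*M.
Hypothesis Hb : u*M + v*k = 1.
Hypothesis Hper : forall y, beta (y + P) = beta y.
Hypothesis Htau : 2*k*tau = 2*sigma + P*q.
Hypothesis Hsig : sigma = 1 \/ sigma = -1.
Hypothesis Hodd : Z.odd tau = true.
Hypothesis Htau0 : 0 < tau < M.
Hypothesis HF : cnt (flipb beta) 0 P <= F.
Hypothesis HFt : F < M - tau.

Lemma HP1 : 0 < P. Proof. lia. Qed.

Lemma agreeb_per y z : agreeb beta k (y + P*z) = agreeb beta k y.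
Proof.
  unfold agreeb. rewrite per_mul; auto. f_equal.
  replace (y + P*z + 2*k) with ((y + 2*k) + P*z) by ring. apply per_mul; auto.
Qed.

Lemma agr_per r j : agr beta k r (j + M) = agr beta k r j.
Proof.
  unfold agr, yj. replace (r + 2*k*(j+M)) with ((r + 2*k*j) + P*k) by (rewrite HPd; ring).
  apply agreeb_per.
Qed.

Lemma hard_orbit r : 2 <= cnt (agr beta k r) 0 M.
Proof.
  destruct (Z_lt_le_dec (cnt (agr beta k r) 0 M) 2) as [Hlt|]; [exfalso|lia].
  assert (Hjs : exists js, 0 <= js < M /\ forall j, 0 <= j < M -> j <> js -> agr beta k r j = false).
  { destruct (classic (exists j1, 0 <= j1 < M /\ agr beta k r j1 = true)) as [[j1 [Hj1 Ha1]]|Hn].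
    - exists j1. split; auto. intros j Hj Hne. destruct (agr beta k r j) eqn:Ea; auto.
      exfalso. assert (2 <= cnt (agr beta k r) 0 M); [|lia].
      change 2 with (Z.of_nat (length (j1 :: j :: nil))). apply cnt_ge_list.
      + constructor. simpl. intros [H|[]]; lia. constructor. simpl; tauto. constructor.
      + intros x [<-|[<-|[]]]; split; auto; lia.
    - exists 0. split. lia. intros j Hj _. destruct (agr beta k r j) eqn:Ea; auto.
      exfalso. apply Hn. exists j. auto. }
  destruct Hjs as [js [Hjs Hall]].
  assert (Hst : forall i, 0 <= i < M - 1 -> agr beta k r (js + 1 + i) = false).
  { intros i Hi. destruct (Z_lt_le_dec (js+1+i) M).
    - apply Hall; lia.
    - replace (js+1+i) with ((js+1+i-M) + M) by ring. rewrite agr_per. apply Hall; lia. }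
  assert (Halt : forall m, 0 <= m <= M - 1 ->
     beta (yj k r (js + 1 + m)) = xorb (beta (yj k r (js+1))) (Z.odd m)).
  { intros m Hm. apply alt_all. lia. intros i Hi. replace (js + 1 + i) with (js+1+i) by ring.
    apply Hst. lia. }
  set (z := fun i => yj k r (js + 1 + i) + (sigma - 1)).
  assert (Hz : forall i, 0 <= i < M - tau -> beta (z i) <> beta (z i + 2)).
  { intros i Hi. unfold z.
    assert (E1 : beta (yj k r (js + 1 + i) + 2*sigma) = beta (yj k r (js + 1 + (i + tau)))).
    { unfold yj. replace (r + 2*k*(js+1+(i+tau))) with ((r + 2*k*(js+1+i) + 2*sigma) + P*q) by lia.
      symmetry. apply per_mul; auto. }
    rewrite Halt in E1 by lia.
    rewrite Z.odd_add, Hodd in E1.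
    assert (E2 := Halt i ltac:(lia)).
    destruct Hsig as [-> | ->].
    - replace (yj k r (js + 1 + i) + (1 - 1) + 2) with (yj k r (js + 1 + i) + 2*1) by ring.
      replace (yj k r (js + 1 + i) + (1 - 1)) with (yj k r (js + 1 + i)) by ring.
      rewrite E1, E2. destruct (beta (yj k r (js + 1))), (Z.odd i); simpl; congruence.
    - replace (yj k r (js + 1 + i) + (-1 - 1) + 2) with (yj k r (js + 1 + i)) by ring.
      replace (yj k r (js + 1 + i) + (-1 - 1)) with (yj k r (js + 1 + i) + 2*(-1)) by ring.
      rewrite E1, E2. destruct (beta (yj k r (js + 1))), (Z.odd i); simpl; congruence. }
  set (e := fun i => if flipb beta (z i) then 0 else 1).
  set (w := fun i => (z i + e i) mod P).
  assert (Hw : forall i, 0 <= i < M - tau -> flipb beta (w i) = true).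
  { intros i Hi. unfold w. rewrite flipb_mod; auto using HP1. unfold e.
    destruct (flipb beta (z i)) eqn:Ef. rewrite Z.add_0_r; auto.
    specialize (Hz i Hi). unfold flipb in *.
    replace (z i + 1 + 1) with (z i + 2) by ring.
    destruct (beta (z i)), (beta (z i + 1)), (beta (z i + 2)); simpl in *; congruence. }
  assert (Hcnt : M - tau <= cnt (flipb beta) 0 P).
  { replace (M - tau) with (Z.of_nat (length (map w (rng 0 (M - tau))))).
    2:{ unfold rng. rewrite !length_map, length_seq. lia. }
    apply cnt_ge_list.
    - apply NoDup_map_in; [|apply NoDup_rng].
      intros i i' Hi Hi' E. apply In_rng in Hi, Hi'. unfold w in E.
      assert (He : -1 <= e i - e i' <= 1) by (unfold e; destruct (flipb beta (z i)), (flipb beta (z i')); lia).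
      destruct (inj_mod 1 k k M P u v (z i + e i) (z i' + e i') (i - i') (e i - e i')) as [H1 _];
        try lia; auto.
      unfold z, yj. ring.
    - intros x Hx. apply in_map_iff in Hx. destruct Hx as [i [<- Hi]]. apply In_rng in Hi.
      split. unfold w. pose proof (Z.mod_pos_bound (z i + e i) P HP1). lia. apply Hw. lia. }
  lia.
Qed.

End Hard.

Open Scope Z_scope.

Lemma odd_pos a : 0 <= a -> Z.odd a = true -> 1 <= a.
Proof. intros H1 H2. destruct (Z.eq_dec a 0); [subst; discriminate|lia]. Qed.

Lemma odd_ge3 a : 2 <= a -> Z.odd a = true -> 3 <= a.
Proof. intros H1 H2. destruct (Z.eq_dec a 2); [subst; discriminate|lia]. Qed.

Lemma pi_lemma (beta : Z -> bool) (k l : Z) :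
  1 <= l <= 3 -> l <= k ->
  (forall y, beta (y + (4*k+2*l)) = beta y) ->
  cnt (flipb beta) 0 (4*k+2*l) <= 2*l ->
  2*l <= cnt (agreeb beta k) 0 (4*k+2*l).
Proof.
  intros Hl Hk Hper HF.
  set (P := 4*k+2*l) in *.
  assert (HP : 0 < P) by lia.
  assert (l = 1 \/ l = 2 \/ l = 3) as [El|[El|El]] by lia.
  -
    assert (G := total_count beta 1 k k (2*k+1) P 1 (-2) ltac:(lia) ltac:(lia) ltac:(lia) ltac:(lia) ltac:(lia) Hper 1 ltac:(lia)).
    assert (2*1*1 <= cnt (agreeb beta k) 0 P); [|lia]. apply G.
    intros r Hr. apply odd_pos. apply cnt_nonneg.
    rewrite (parity_orbit beta k P Hper r (2*k+1) k) by lia.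
    rewrite Z.odd_add, Z.odd_mul. reflexivity.
  - destruct (Z.even k) eqn:Ek.
    + apply Z.even_spec in Ek. destruct Ek as [c Hc].
      assert (G := total_count beta 2 k c (2*c+1) P 1 (-2) ltac:(lia) ltac:(lia) ltac:(lia) ltac:(lia) ltac:(lia) Hper 1 ltac:(lia)).
      assert (2*2*1 <= cnt (agreeb beta k) 0 P); [|lia]. apply G.
      intros r Hr. apply odd_pos. apply cnt_nonneg.
      rewrite (parity_orbit beta k P Hper r (2*c+1) c) by lia.
      rewrite Z.odd_add, Z.odd_mul. reflexivity.
    + assert (Ok : Z.odd k = true) by (rewrite <- Z.negb_even, Ek; reflexivity).
      apply Z.odd_spec in Ok. destruct Ok as [c Hc].
      assert (G := total_count beta 1 k k (2*k+2) P (-c) k ltac:(lia) ltac:(lia) ltac:(lia) ltac:(lia) ltac:(nia) Hper 2 ltac:(lia)).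
      assert (2*1*2 <= cnt (agreeb beta k) 0 P); [|lia]. apply G.
      intros r Hr.
      apply (hard_orbit beta k (2*k+2) P (-c) k k 1 c 4 ltac:(lia) ltac:(lia) ltac:(nia) Hper ltac:(subst P; nia)
               ltac:(lia) ltac:(rewrite Hc, Z.odd_add, Z.odd_mul; reflexivity) ltac:(lia) ltac:(lia) ltac:(lia)).
  - assert (Hm3 := Z_div_mod_eq_full k 3). assert (Hr3 := Z.mod_pos_bound k 3 ltac:(lia)).
    set (a := k / 3) in *. set (b := k mod 3) in *.
    assert (b = 0 \/ b = 1 \/ b = 2) as [Eb|[Eb|Eb]] by lia.
    + assert (G := total_count beta 3 k a (2*a+1) P 1 (-2) ltac:(lia) ltac:(lia) ltac:(lia) ltac:(lia) ltac:(lia) Hper 1 ltac:(lia)).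
      assert (2*3*1 <= cnt (agreeb beta k) 0 P); [|lia]. apply G.
      intros r Hr. apply odd_pos. apply cnt_nonneg.
      rewrite (parity_orbit beta k P Hper r (2*a+1) a) by lia.
      rewrite Z.odd_add, Z.odd_mul. reflexivity.
    + assert (G := total_count beta 1 k k (2*k+3) P (-a) (2*a+1) ltac:(lia) ltac:(lia) ltac:(lia) ltac:(lia) ltac:(nia) Hper 3 ltac:(lia)).
      assert (2*1*3 <= cnt (agreeb beta k) 0 P); [|lia]. apply G.
      intros r Hr. apply odd_ge3.
      * apply (hard_orbit beta k (2*k+3) P (-a) (2*a+1) (2*a+1) 1 a 6 ltac:(lia) ltac:(lia) ltac:(nia) Hper ltac:(subst P; nia)
               ltac:(lia) ltac:(rewrite Z.odd_add, Z.odd_mul; reflexivity) ltac:(lia) ltac:(lia) ltac:(lia)).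
      * rewrite (parity_orbit beta k P Hper r (2*k+3) k) by lia.
        rewrite Z.odd_add, Z.odd_mul. reflexivity.
    + assert (G := total_count beta 1 k k (2*k+3) P (a+1) (-(2*a+3)) ltac:(lia) ltac:(lia) ltac:(lia) ltac:(lia) ltac:(nia) Hper 3 ltac:(lia)).
      assert (2*1*3 <= cnt (agreeb beta k) 0 P); [|lia]. apply G.
      intros r Hr. apply odd_ge3.
      * apply (hard_orbit beta k (2*k+3) P (a+1) (-(2*a+3)) (2*a+3) (-1) (a+1) 6 ltac:(lia) ltac:(lia) ltac:(nia) Hper ltac:(subst P; nia)
               ltac:(lia) ltac:(rewrite Z.odd_add, Z.odd_mul; reflexivity) ltac:(lia) ltac:(lia) ltac:(lia)).
      * rewrite (parity_orbit beta k P Hper r (2*k+3) k) by lia.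
        rewrite Z.odd_add, Z.odd_mul. reflexivity.
Qed.

Open Scope Z_scope.

Definition bz (b : bool) : Z := if b then 1 else 0.

Lemma indep_no (S : list Z) A i j : independent S A -> In (Z.abs (i - j)) S -> A i = true -> A j = false.
Proof.
  intros H HS Hi. destruct (A j) eqn:Ej; auto. exfalso. apply (H i j Hi Ej HS).
Qed.

Section Window.
Variables (A : Z -> bool) (k l : Z).
Hypothesis Hl : 1 <= l <= 3.
Hypothesis Hk : l <= k.
Hypothesis Hind : independent (1 :: 2*k :: 2*k+2*l :: nil) A.

Let P := 4*k+2*l.
Definition betaA (y : Z) : bool := xorb (A (y mod P)) (Z.odd y).

Lemma betaA_per y : betaA (y + P) = betaA y.
Proof.
  unfold betaA. rewrite <- (Z.mul_1_l P) at 1. rewrite Z_mod_plus_full.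
  f_equal. rewrite Z.odd_add. unfold P. rewrite Z.odd_add, !Z.odd_mul. simpl.
  destruct (Z.odd y); reflexivity.
Qed.

Definition partner (y : Z) : Z := if y <? 2*k+2*l then y + 2*k else y - 2*k - 2*l.

Lemma partner_mod y : 0 <= y < P -> (y + 2*k) mod P = partner y.
Proof.
  intro Hy. unfold partner. destruct (Z.ltb_spec y (2*k+2*l)).
  - apply Z.mod_small. unfold P in *. lia.
  - replace (y + 2*k) with ((y - 2*k - 2*l) + 1*P) by (unfold P; ring).
    rewrite Z_mod_plus_full. apply Z.mod_small. unfold P in *. lia.
Qed.

Lemma agree_iff y : 0 <= y < P ->
  bz (A y) + bz (A (partner y)) + bz (agreeb betaA k y) = 1.
Proof.
  intro Hy. unfold agreeb, betaA. rewrite Z.mod_small by auto. rewrite partner_mod by auto.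
  replace (Z.odd (y + 2*k)) with (Z.odd y) by (rewrite Z.odd_add, Z.odd_mul; simpl; destruct (Z.odd y); reflexivity).
  assert (Hno : A y = true -> A (partner y) = false).
  { apply indep_no with (S := 1 :: 2*k :: 2*k+2*l :: nil); auto. unfold partner.
    destruct (Z.ltb_spec y (2*k+2*l)); cbn [In].
    - right; left. lia.
    - right; right; left. lia. }
  destruct (A y), (A (partner y)), (Z.odd y); simpl; try reflexivity.
  all: specialize (Hno eq_refl); discriminate.
Qed.

Lemma flip_iff t : 0 <= t < P - 1 ->
  bz (A t) + bz (A (t+1)) + bz (flipb betaA t) = 1.
Proof.
  intro Ht. unfold flipb, betaA. rewrite !Z.mod_small by (unfold P in *; lia).
  rewrite Z.odd_add. simpl.
  assert (Hno : A t = true -> A (t+1) = false).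
  { apply indep_no with (S := 1 :: 2*k :: 2*k+2*l :: nil); auto. cbn [In]. left. lia. }
  destruct (A t), (A (t+1)), (Z.odd t); simpl; try reflexivity.
  all: specialize (Hno eq_refl); discriminate.
Qed.

Lemma cnt_partner : cnt (fun y => A (partner y)) 0 P = cnt A 0 P.
Proof.
  assert (L : cnt (fun y => A (partner y)) 0 P = cnt (fun y => A (partner y)) 0 (2*k+2*l)
              + cnt (fun y => A (partner y)) (2*k+2*l) (2*k)).
  { unfold P. replace (4*k+2*l) with ((2*k+2*l) + 2*k) by ring. rewrite cnt_add by lia. reflexivity. }
  assert (R : cnt A 0 P = cnt A 0 (2*k) + cnt A (2*k) (2*k+2*l)).
  { unfold P. replace (4*k+2*l) with (2*k + (2*k+2*l)) by ring. rewrite cnt_add by lia. reflexivity. }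
  assert (E1 : cnt (fun y => A (partner y)) 0 (2*k+2*l) = cnt A (2*k) (2*k+2*l)).
  { assert (S1 : cnt A (2*k) (2*k+2*l) = cnt (fun x => A (x + 2*k)) 0 (2*k+2*l))
      by (rewrite <- (Z.add_0_l (2*k)) at 1; apply cnt_shift).
    rewrite S1. apply cnt_ext.
    intros x Hx. unfold partner. destruct (Z.ltb_spec x (2*k+2*l)); [f_equal; lia | lia]. }
  assert (E2 : cnt (fun y => A (partner y)) (2*k+2*l) (2*k) = cnt A 0 (2*k)).
  { assert (S1 : cnt (fun y => A (partner y)) (2*k+2*l) (2*k) = cnt (fun x => A (partner (x + (2*k+2*l)))) 0 (2*k))
      by (rewrite <- (Z.add_0_l (2*k+2*l)) at 1; apply (cnt_shift (fun y => A (partner y)))).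
    rewrite S1. apply cnt_ext.
    intros x Hx. unfold partner. destruct (Z.ltb_spec (x + (2*k+2*l)) (2*k+2*l)); [lia | f_equal; lia]. }
  rewrite L, R, E1, E2. lia.
Qed.

Lemma cnt_bz p a n : 0 <= n -> cnt p a (n+1) = cnt p a n + bz (p (a+n)).
Proof. intro. rewrite cnt_succ by auto. reflexivity. Qed.

Lemma window0 : cnt A 0 P <= 2*k.
Proof.
  set (c := cnt A 0 P).
  assert (HP : 0 < P) by (unfold P; lia).
  assert (Eag : cnt A 0 P + cnt (fun y => A (partner y)) 0 P + cnt (agreeb betaA k) 0 P = P).
  { apply cnt_sum3. lia. intros x Hx. apply agree_iff. lia. }
  rewrite cnt_partner in Eag.
  assert (Efl : cnt A 0 (P-1) + cnt (fun t => A (t+1)) 0 (P-1) + cnt (flipb betaA) 0 (P-1) = P-1).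
  { apply cnt_sum3. lia. intros x Hx. apply flip_iff. lia. }
  assert (E1 : cnt A 0 P = cnt A 0 (P-1) + bz (A (P-1))).
  { replace P with ((P-1)+1) at 1 by ring. rewrite cnt_bz by lia. reflexivity. }
  assert (E2 : cnt A 0 P = bz (A 0) + cnt (fun t => A (t+1)) 0 (P-1)).
  { replace P with (1 + (P-1)) at 1 by ring. rewrite cnt_add by lia.
    replace (cnt A 0 1) with (bz (A 0)) by (replace 1 with (0+1) by ring; rewrite cnt_bz by lia; reflexivity).
    f_equal. replace (0+1) with (0 + 1) by ring. rewrite cnt_shift. reflexivity. }
  assert (E3 : cnt (flipb betaA) 0 P = cnt (flipb betaA) 0 (P-1) + bz (flipb betaA (P-1))).
  { replace P with ((P-1)+1) at 1 by ring. rewrite cnt_bz by lia. reflexivity. }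
  assert (B1 : 0 <= bz (A (P-1)) <= 1) by (unfold bz; destruct (A (P-1)); lia).
  assert (B2 : 0 <= bz (A 0) <= 1) by (unfold bz; destruct (A 0); lia).
  assert (B3 : 0 <= bz (flipb betaA (P-1)) <= 1) by (unfold bz; destruct (flipb betaA (P-1)); lia).
  destruct (Z_le_gt_dec c (2*k)) as [|Hc]; auto. exfalso.
  assert (HF : cnt (flipb betaA) 0 P <= 2*l) by (unfold c, P in *; lia).
  assert (HA := pi_lemma betaA k l Hl Hk betaA_per HF).
  assert (Hc2 : cnt A 0 (4*k+2*l) > 2*k) by exact Hc. unfold P, c in *. lia.
Qed.

End Window.

Lemma window_bound (A : Z -> bool) (k l : Z) :
  1 <= l <= 3 -> l <= k -> independent (1 :: 2*k :: 2*k+2*l :: nil) A ->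
  forall a, cnt A a (4*k+2*l) <= 2*k.
Proof.
  intros Hl Hk Hind a.
  replace a with (0 + a) by ring. rewrite cnt_shift.
  apply (window0 (fun x => A (x + a)) k l Hl Hk).
  intros i j Hi Hj. replace (i - j) with ((i + a) - (j + a)) by ring. apply Hind; auto.
Qed.

Open Scope Z_scope.

Section Constr.
Variables k l : Z.
Hypothesis Hl : 1 <= l <= 3.
Hypothesis Hk : l <= k.
Let P := 4*k+2*l.

Definition pat (r : Z) : bool :=
  ((r <? 2*k) && Z.even r) || ((2*k <? r) && (r <? 4*k) && Z.odd r).

Definition A0 (x : Z) : bool := pat (x mod P).

Lemma par_cases x : (exists m, x = 2*m /\ Z.even x = true /\ Z.odd x = false) \/
                    (exists m, x = 2*m+1 /\ Z.even x = false /\ Z.odd x = true).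
Proof.
  destruct (Z.even x) eqn:E.
  - left. apply Z.even_spec in E as E'. destruct E' as [m Hm]. exists m. split; auto. split; auto.
    rewrite <- Z.negb_even, E. reflexivity.
  - right. assert (O : Z.odd x = true) by (rewrite <- Z.negb_even, E; reflexivity).
    apply Z.odd_spec in O as O'. destruct O' as [m Hm]. exists m. auto.
Qed.

Lemma pat_true r : pat r = true -> (r < 2*k /\ exists m, r = 2*m) \/ (2*k < r < 4*k /\ exists m, r = 2*m+1).
Proof.
  unfold pat. intro H. destruct (par_cases r) as [[m [Hm [E O]]]|[m [Hm [E O]]]]; rewrite E, O in H;
  rewrite ?andb_true_r, ?andb_false_r, ?orb_false_r, ?orb_false_l in H.
  - left. apply Z.ltb_lt in H. split; eauto.
  - right. apply andb_true_iff in H. destruct H as [H1 H2]. apply Z.ltb_lt in H1, H2. split; eauto.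
Qed.

Lemma pat_false r : ~ (r < 2*k /\ exists m, r = 2*m) -> ~ (2*k < r < 4*k /\ exists m, r = 2*m+1) -> pat r = false.
Proof.
  intros H1 H2. destruct (pat r) eqn:E; auto. exfalso. apply pat_true in E. tauto.
Qed.

Lemma key r s : 0 <= r < P -> (s = 1 \/ s = 2*k \/ s = 2*k+2*l) -> pat r = true -> pat ((r + s) mod P) = false.
Proof.
  intros Hr Hs Hp. apply pat_true in Hp.
  assert (HP : 0 < P) by (unfold P; lia).
  assert (Hsl : 0 < s < P) by (unfold P; lia).
  destruct (Z_lt_le_dec (r + s) P).
  - rewrite Z.mod_small by lia. apply pat_false; intros [H1 [m' Hm']];
    destruct Hp as [[H3 [m Hm]]|[H3 [m Hm]]]; unfold P in *; lia.
  - replace (r + s) with ((r + s - P) + 1*P) by ring. rewrite Z_mod_plus_full.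
    rewrite Z.mod_small by lia. apply pat_false; intros [H1 [m' Hm']];
    destruct Hp as [[H3 [m Hm]]|[H3 [m Hm]]]; unfold P in *; lia.
Qed.

Lemma A0_indep : independent (1 :: 2*k :: 2*k+2*l :: nil) A0.
Proof.
  assert (HP : 0 < P) by (unfold P; lia).
  assert (G : forall i s, (s = 1 \/ s = 2*k \/ s = 2*k+2*l) -> A0 i = true -> A0 (i + s) = false).
  { intros i s Hs Hi. unfold A0 in *. rewrite <- Z.add_mod_idemp_l by lia.
    apply key; auto. apply Z.mod_pos_bound; auto. }
  intros i j Hi Hj HS. cbn [In] in HS.
  assert (Hs : exists s, (s = 1 \/ s = 2*k \/ s = 2*k+2*l) /\ ((j = i + s) \/ (i = j + s))).
  { exists (Z.abs (i - j)). split. destruct HS as [H|[H|[H|[]]]]; lia. lia. }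
  destruct Hs as [s [Hs [-> | ->]]].
  - rewrite (G i s Hs Hi) in Hj. discriminate.
  - rewrite (G j s Hs Hj) in Hi. discriminate.
Qed.

Lemma cnt_even_odd a m : 0 <= m -> cnt Z.even (2*a) (2*m) = m /\ cnt Z.odd (2*a) (2*m) = m.
Proof.
  intro Hm. pattern m. apply natlike_ind; [ | | exact Hm].
  - rewrite Z.mul_0_r, !cnt_0. auto.
  - intros x Hx [IH1 IH2]. replace (2 * Z.succ x) with (2*x + 1 + 1) by ring.
    rewrite !cnt_succ by lia.
    rewrite IH1, IH2.
    replace (2*a + (2*x+1)) with (2*(a+x)+1) by ring. replace (2*a + 2*x) with (2*(a+x)) by ring.
    rewrite ?Z.even_add, ?Z.odd_add, !Z.even_mul, !Z.odd_mul. simpl. lia.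
Qed.

Lemma cnt_A0_0 : cnt A0 0 P = 2*k.
Proof.
  assert (HP : 0 < P) by (unfold P; lia).
  assert (E : cnt A0 0 P = cnt pat 0 P) by (apply cnt_ext; intros x Hx; unfold A0; rewrite Z.mod_small; auto; lia).
  rewrite E. unfold P. replace (4*k+2*l) with (2*k + (2*k + 2*l)) by ring.
  rewrite cnt_add by lia. replace (2*k + 2*l) with (2*k + 2*l) by ring. rewrite cnt_add by lia.
  assert (E1 : cnt pat 0 (2*k) = k).
  { transitivity (cnt Z.even (2*0) (2*k)); [|apply (cnt_even_odd 0 k); lia]. rewrite Z.mul_0_r. apply cnt_ext.
    intros x Hx. unfold pat. destruct (Z.ltb_spec x (2*k)); [|lia].
    destruct (Z.ltb_spec (2*k) x); [lia|]. cbn [andb orb]. destruct (Z.even x); reflexivity. }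
  assert (E2 : cnt pat (0 + 2*k) (2*k) = k).
  { replace (0 + 2*k) with (2*k) by ring. transitivity (cnt Z.odd (2*k) (2*k)); [|apply (cnt_even_odd k k); lia]. apply cnt_ext.
    intros x Hx. unfold pat. destruct (Z.ltb_spec x (2*k)); [lia|]. cbn [andb orb].
    destruct (Z.eq_dec x (2*k)).
    - subst. destruct (Z.ltb_spec (2*k) (2*k)); [lia|]. cbn [andb orb]. rewrite Z.odd_mul. reflexivity.
    - destruct (Z.ltb_spec (2*k) x); [|lia]. destruct (Z.ltb_spec x (4*k)); [|lia]. reflexivity. }
  assert (E3 : cnt pat (0 + 2*k + 2*k) (2*l) = 0).
  { assert (cnt pat (0 + 2*k + 2*k) (2*l) <= cnt (fun _ => false) (0 + 2*k + 2*k) (2*l)).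
    { apply cnt_le. intros x Hx H. unfold pat in H.
      destruct (Z.ltb_spec x (2*k)); [lia|]. destruct (Z.ltb_spec x (4*k)); [lia|].
      rewrite !andb_false_r in H. cbn [andb orb] in H. discriminate. }
    assert (cnt (fun _ => false) (0 + 2*k + 2*k) (2*l) <= 0).
    { pose proof (cnt_list (fun _ => false) (0+2*k+2*k) (2*l)) as [L [_ [HL HL2]]].
      destruct L as [|x L]. cbn [length Z.of_nat] in HL. lia. destruct (HL2 x (or_introl eq_refl)). discriminate. }
    pose proof (cnt_nonneg pat (0 + 2*k + 2*k) (2*l)). lia. }
  replace (0 + (2*k)) with (0 + 2*k) in * by ring.
  rewrite E1. rewrite E2. replace (0 + 2 * k + 2 * k) with (0 + 2*k + 2*k) by ring. rewrite E3. ring.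
Qed.

Lemma A0_per x : A0 (x + P) = A0 x.
Proof. unfold A0. rewrite <- (Z.mul_1_l P) at 1. rewrite Z_mod_plus_full. reflexivity. Qed.

Lemma cnt_A0_step a : cnt A0 (a+1) P = cnt A0 a P.
Proof.
  assert (HP : 0 < P) by (unfold P; lia).
  assert (E1 : cnt A0 a (P+1) = cnt A0 a P + (if A0 (a+P) then 1 else 0)) by (apply cnt_succ; lia).
  assert (E2 : cnt A0 a (1+P) = cnt A0 a 1 + cnt A0 (a+1) P) by (apply cnt_add; lia).
  replace (1+P) with (P+1) in E2 by ring.
  assert (E3 : cnt A0 a 1 = if A0 a then 1 else 0) by (replace 1 with (0+1) by ring; rewrite cnt_succ by lia; rewrite Z.add_0_r; reflexivity).
  rewrite A0_per in E1. lia.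
Qed.

Lemma cnt_A0 a : cnt A0 a P = 2*k.
Proof.
  assert (G : forall n, 0 <= n -> cnt A0 n P = 2*k /\ cnt A0 (-n) P = 2*k).
  { intros n Hn. pattern n. apply natlike_ind; [ | | exact Hn].
    - simpl. rewrite cnt_A0_0. auto.
    - intros x Hx [IH1 IH2]. unfold Z.succ. split.
      + rewrite cnt_A0_step. auto.
      + rewrite <- IH2. replace (-x) with (-(x+1) + 1) by ring. rewrite cnt_A0_step. reflexivity. }
  destruct (Z_le_gt_dec 0 a). apply G; auto. replace a with (- (-a)) by ring. apply G. lia.
Qed.

End Constr.

Open Scope R_scope.
Lemma cnt_mono p a n m : (0 <= n <= m)%Z -> (cnt p a n <= cnt p a m)%Z.
Proof.
  intro H. replace m with (n + (m - n))%Z by ring. rewrite cnt_add by lia.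
  pose proof (cnt_nonneg p (a+n) (m-n)). lia.
Qed.

Lemma window_rng A N : INR (length (filter A (window N))) = IZR (cnt A (- Z.of_nat N) (Z.of_nat (2*N+1))).
Proof.
  unfold cnt. rewrite INR_IZR_INZ. f_equal. f_equal. f_equal. f_equal.
  unfold window, rng. rewrite Nat2Z.id. apply map_ext. intro; lia.
Qed.

Lemma real_upper (c a n P : R) : 0 < n -> 0 < P -> c * P <= a * n + a * P -> c / n <= a / P + a * / n.
Proof.
  intros Hn HP H.
  assert (E : a / P + a * / n - c / n = (a * n + a * P - c * P) / (n * P)) by (field; lra).
  assert (0 <= (a * n + a * P - c * P) / (n * P)) by (apply Rdiv_le_0_compat; [lra | apply Rmult_lt_0_compat; lra]).
  lra.
Qed.

Lemma real_lower (c a n P : R) : 0 < n -> 0 < P -> a * n - a * P <= c * P -> a / P - a * / n <= c / n.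
Proof.
  intros Hn HP H.
  assert (E : c / n - (a / P - a * / n) = (c * P - (a * n - a * P)) / (n * P)) by (field; lra).
  assert (0 <= (c * P - (a * n - a * P)) / (n * P)) by (apply Rdiv_le_0_compat; [lra | apply Rmult_lt_0_compat; lra]).
  lra.
Qed.

Section Final.
Variables k l : Z.
Hypothesis Hl : (1 <= l <= 3)%Z.
Hypothesis Hk : (l <= k)%Z.
Let P := (4*k+2*l)%Z.
Let S := (1%Z :: (2 * k)%Z :: (2 * k + 2 * l)%Z :: nil).
Let d := IZR (2 * k) / IZR (4 * k + 2 * l).
Let e (N : nat) := IZR (2*k) * / INR (2*N+1).

Lemma cnt_mult_upper A : independent S A -> forall q a, (0 <= q)%Z -> (cnt A a (q*P) <= 2*k*q)%Z.
Proof.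
  intros Hind q a Hq. revert a. pattern q. apply natlike_ind; [ | | exact Hq].
  - intro a. rewrite Z.mul_0_l, cnt_0. lia.
  - intros x Hx IH a. replace (Z.succ x * P)%Z with (x*P + P)%Z by ring.
    rewrite cnt_add by (unfold P; nia). specialize (IH a).
    assert (W := window_bound A k l Hl Hk Hind (a + x*P)). fold P in W. lia.
Qed.

Lemma cnt_mult_A0 q a : (0 <= q)%Z -> cnt (A0 k l) a (q*P) = (2*k*q)%Z.
Proof.
  intros Hq. revert a. pattern q. apply natlike_ind; [ | | exact Hq].
  - intro a. rewrite Z.mul_0_l, cnt_0. lia.
  - intros x Hx IH a. replace (Z.succ x * P)%Z with (x*P + P)%Z by ring.
    rewrite cnt_add by (unfold P; nia). rewrite IH.
    assert (W := cnt_A0 k l Hl Hk (a + x*P)). fold P in W. rewrite W. lia.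
Qed.

Lemma Z_upper A : independent S A -> forall a n, (0 < n)%Z -> (cnt A a n * P <= 2*k*n + 2*k*P)%Z.
Proof.
  intros Hind a n Hn.
  assert (HP : (0 < P)%Z) by (unfold P; lia).
  pose proof (Z_div_mod_eq_full n P) as E. pose proof (Z.mod_pos_bound n P HP) as B.
  set (q := (n / P)%Z) in *.
  assert (Hq : (0 <= q)%Z) by (apply Z.div_pos; lia).
  assert (H1 : (cnt A a n <= cnt A a ((q+1)*P))%Z) by (apply cnt_mono; nia).
  assert (H2 := cnt_mult_upper A Hind (q+1) a ltac:(lia)).
  nia.
Qed.

Lemma Z_lower a n : (0 < n)%Z -> (2*k*n - 2*k*P <= cnt (A0 k l) a n * P)%Z.
Proof.
  intros Hn.
  assert (HP : (0 < P)%Z) by (unfold P; lia).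
  pose proof (Z_div_mod_eq_full n P) as E. pose proof (Z.mod_pos_bound n P HP) as B.
  set (q := (n / P)%Z) in *.
  assert (Hq : (0 <= q)%Z) by (apply Z.div_pos; lia).
  assert (H1 : (cnt (A0 k l) a (q*P) <= cnt (A0 k l) a n)%Z) by (apply cnt_mono; nia).
  rewrite (cnt_mult_A0 q a Hq) in H1.
  nia.
Qed.

Lemma ratio_upper A : independent S A -> forall N, dens_ratio A N <= d + e N.
Proof.
  intros Hind N. unfold dens_ratio, d, e. rewrite window_rng.
  rewrite (INR_IZR_INZ (2*N+1)).
  apply real_upper.
  - apply IZR_lt. lia.
  - apply IZR_lt. lia.
  - rewrite <- !mult_IZR, <- plus_IZR. apply IZR_le. apply Z_upper; auto. lia.
Qed.

Lemma ratio_lower N : d - e N <= dens_ratio (A0 k l) N.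
Proof.
  unfold dens_ratio, d, e. rewrite window_rng.
  rewrite (INR_IZR_INZ (2*N+1)).
  apply real_lower.
  - apply IZR_lt. lia.
  - apply IZR_lt. lia.
  - rewrite <- !mult_IZR, <- minus_IZR. apply IZR_le. apply Z_lower. lia.
Qed.

Lemma e_lim : is_lim_seq e 0.
Proof.
  assert (H1 : is_lim_seq (fun N => INR (2*N+1)) p_infty).
  { apply is_lim_seq_le_p_loc with (u := INR). exists 0%nat. intros n _. apply le_INR. lia.
    apply is_lim_seq_INR. }
  assert (H2 := is_lim_seq_inv _ _ H1 ltac:(discriminate)).
  assert (H3 := is_lim_seq_scal_l _ (IZR (2*k)) _ H2).
  simpl in H3. rewrite Rmult_0_r in H3. exact H3.
Qed.

Lemma density_upper A : independent S A -> Rbar_le (density A) d.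
Proof.
  intro Hind. unfold density.
  assert (L : is_lim_seq (fun N => d + e N) d).
  { assert (H : is_lim_seq (fun N => d + e N) (d + 0)) by (apply is_lim_seq_plus'; [apply is_lim_seq_const | apply e_lim]).
    rewrite Rplus_0_r in H. exact H. }
  assert (E : LimSup_seq (fun N => d + e N) = d) by (apply is_LimSup_seq_unique, is_lim_LimSup_seq, L).
  rewrite <- E. apply LimSup_le. exists 0%nat. intros n _. apply ratio_upper; auto.
Qed.

Lemma density_A0 : density (A0 k l) = d.
Proof.
  unfold density. apply is_LimSup_seq_unique, is_lim_LimSup_seq.
  apply is_lim_seq_le_le_loc with (u := fun N => d - e N) (w := fun N => d + e N).
  - exists 0%nat. intros n _. split. apply ratio_lower. apply ratio_upper. apply A0_indep; auto.
  - assert (H : is_lim_seq (fun N => d - e N) (d - 0)) by (apply is_lim_seq_minus'; [apply is_lim_seq_const | apply e_lim]).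
    rewrite Rminus_0_r in H. exact H.
  - assert (H : is_lim_seq (fun N => d + e N) (d + 0)) by (apply is_lim_seq_plus'; [apply is_lim_seq_const | apply e_lim]).
    rewrite Rplus_0_r in H. exact H.
Qed.

Lemma final : indep_ratio S = Finite d.
Proof.
  unfold indep_ratio. apply Rbar_is_lub_unique. split.
  - intros x [A [HA <-]]. apply density_upper; auto.
  - intros b Hb. rewrite <- density_A0. apply Hb. exists (A0 k l). split; auto. apply A0_indep; auto.
Qed.

End Final.

Theorem theorem31 (l k : Z) :
  (1 <= l <= 3)%Z -> (l <= k)%Z ->
  indep_ratio (1%Z :: (2 * k)%Z :: (2 * k + 2 * l)%Z :: nil)
  = Finite (IZR (2 * k) / IZR (4 * k + 2 * l)).
Proof.
  intros Hl Hk. exact (final k l Hl Hk).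
Qed.
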